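(* Let $G$ be a directed graph with node set $V(G)=\{1,\ldots,n\}$ and let $Z\subseteq V(G)$ be a set of control nodes such that the LTI network on $G$ with control node set $Z$ is strongly structurally controllable. Then there exist a set $\mathcal{C}$ of node-disjoint chains with $\bigcup_{C\in\mathcal{C}}V(C)=V(G)$ whose set of sources is $Z$, and a time function $T$ for $\mathcal{C}$, such that $G\in\mathcal{G}^{\mathcal{C},T}$.
   Context: Graphs are directed, self-loops allowed. The qualitative class of $G$ is $\mathcal{Q}(G)=\{A\in\mathbb{R}^{n\times n}: \text{for } i\neq j,\ A_{ij}\neq0 \iff (j,i)\in E(G)\}$ (diagonal entries arbitrary). For a set of control nodes $V_C=\{j_1,\ldots,j_m\}\subseteq V(G)$, the input matrix is $B=[e_{j_1},\ldots,e_{j_m}]$, $e_j$ the $j$th column of $I_n$. The LTI network $\dot x=Ax+Bu$ on $G$ with control nodes $V_C$ is strongly structurally controllable (SSC) if $(A,B)$ is controllable for every $A\in\mathcal{Q}(G)$. A chain is a directed path graph; its start node is its source and its end node its sink; for a non-sink node $v$ of a chain, $v+1$ denotes its out-neighbor in the chain. For node-disjoint chains $\mathcal{C}=\{C_1,\ldots,C_m\}$ with $V=\bigcup_iV(C_i)$, $n=|V|$, $\gamma=n-m+1$, a time function is $T:V\to\{1,\ldots,\gamma\}$ with (1) $T(v)=1$ for every source; (2) distinct non-source nodes have distinct values; (3) $T(v)<T(v+1)$ for every non-sink $v$. Let $T_{\max}(v)=\gamma$ if $v$ is a sink and $T_{\max}(v)=T(v+1)-1$ otherwise. $\mathcal{G}^{\mathcal{C},T}$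 is the set of graphs $G$ with $V(G)=V$, $\bigcup_iE(C_i)\subseteq E(G)$, and such that for all $u,v\in V$ with $(u,v)\notin\bigcup_iE(C_i)$ and $T_{\max}(u)<T(v)$ we have $(u,v)\notin E(G)$. *)

(* Defs.v *)
From HB Require Import structures.
From mathcomp Require Import all_boot all_order all_algebra.
From mathcomp Require Import Rstruct.
From Stdlib Require Import Rdefinitions.
Set Implicit Arguments. Unset Strict Implicit. Unset Printing Implicit Defensive.
Import Order.TTheory GRing.Theory Num.Theory.

(* A directed graph on V = {0,...,n-1} (= {1,...,n} shifted) is an edge
   relation E : rel 'I_n; E u v means (u,v) is an edge u -> v.
   Self-loops are allowed. *)

Definition qual_class (n : nat) (E : rel 'I_n) (A : 'M[R]_n) : Prop :=
  forall i j : 'I_n, i != j -> (A i j != 0%R <-> E j i).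

Definition input_matrix (n : nat) (Z : {set 'I_n}) : 'M[R]_(n, #|Z|) :=
  \matrix_(i < n, k < #|Z|) (if i == enum_val k then 1%R else 0%R).

(* (A,B) controllable: Kalman rank condition
   rank [B, AB, ..., A^(n-1) B] = n.  The rank of this block matrix is
   the dimension of the sum of the row spaces of the transposed blocks. *)
Definition controllable (n m : nat) (A : 'M[R]_n) (B : 'M[R]_(n, m)) : Prop :=
  \rank (\sum_(k < n) <<(A ^+ k *m B)^T>>)%MS = n.

Definition SSC (n : nat) (E : rel 'I_n) (Z : {set 'I_n}) : Prop :=
  forall A : 'M[R]_n, qual_class E A -> controllable A (input_matrix Z).

(* A set of chains is represented by a list cs of node lists; each list
   c = [:: v_1; ...; v_k] is the chain v_1 -> v_2 -> ... -> v_k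
   (source v_1, sink v_k). *)

Definition chain_cover (n : nat) (cs : seq (seq 'I_n)) : Prop :=
  all (fun c => c != [::]) cs /\ uniq (flatten cs) /\
  (forall v : 'I_n, v \in flatten cs).

Definition chain_edge (n : nat) (cs : seq (seq 'I_n)) (u v : 'I_n) : bool :=
  has (fun c => (u, v) \in zip c (behead c)) cs.

Definition chain_sources (n : nat) (cs : seq (seq 'I_n)) : {set 'I_n} :=
  [set v | has (fun c => ohead c == Some v) cs].

Definition gamma (n : nat) (cs : seq (seq 'I_n)) : nat := n - size cs + 1.

Definition chain_succ (n : nat) (cs : seq (seq 'I_n)) (u : 'I_n) : option 'I_n :=
  [pick v | chain_edge cs u v].

Definition time_function (n : nat) (cs : seq (seq 'I_n)) (T : 'I_n -> nat) : Prop :=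
  (forall v, 1 <= T v <= gamma cs)%N /\
  (forall v, v \in chain_sources cs -> T v = 1%N) /\
  (forall u v, u != v -> u \notin chain_sources cs -> v \notin chain_sources cs ->
     T u != T v) /\
  (forall u v, chain_edge cs u v -> T u < T v)%N.

Definition Tmax (n : nat) (cs : seq (seq 'I_n)) (T : 'I_n -> nat) (u : 'I_n) : nat :=
  match chain_succ cs u with
  | Some v => (T v - 1)%N
  | None => gamma cs
  end.

(* G in G^{C,T} (V(G) = V holds by typing) *)
Definition in_graph_class (n : nat) (cs : seq (seq 'I_n)) (T : 'I_n -> nat)
  (E : rel 'I_n) : Prop :=
  (forall u v, chain_edge cs u v -> E u v) /\
  (forall u v, ~~ chain_edge cs u v -> (Tmax cs T u < T v)%N -> ~~ E u v).

(* Main.v *)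
Require Import Defs.
From HB Require Import structures.
From mathcomp Require Import all_boot all_order all_algebra.
From mathcomp Require Import Rstruct.
From Stdlib Require Import Rdefinitions.
From mathcomp Require Import zify.
Set Implicit Arguments. Unset Strict Implicit. Unset Printing Implicit Defensive.
Import Order.TTheory GRing.Theory Num.Theory.

Section SeqL.
Variable T : eqType.

Lemma zip_rcons_beh (a : T) s v x y :
  ((x, y) \in zip (a :: rcons s v) (rcons s v)) =
  ((x, y) \in zip (a :: s) s) || ((x, y) == (last a s, v)).
Proof.
elim: s a => [|b s IH] a /=; first by rewrite mem_seq1.
by rewrite !in_cons IH orbA.
Qed.

Lemma zip_beh_mem (a : T) s x y :
  (x, y) \in zip (a :: s) s -> (x \in a :: s) && (y \in s).
Proof.
elim: s a => [|b s IH] a //=.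
rewrite in_cons => /orP[/eqP[-> ->]|/IH/andP[H1 H2]].
  by rewrite !in_cons !eqxx.
by rewrite H1 orbT in_cons H2 orbT.
Qed.

Lemma zip_beh_last (a : T) s u :
  u \in a :: s -> u != last a s -> exists y, (u, y) \in zip (a :: s) s.
Proof.
elim: s a => [|b s IH] a /=.
  by rewrite in_cons in_nil orbF => /eqP ->; rewrite eqxx.
rewrite in_cons => /orP[/eqP ->|Hu] Hl.
  by exists b; rewrite in_cons eqxx.
have [y Hy] := IH b Hu Hl. by exists y; rewrite in_cons Hy orbT.
Qed.
End SeqL.


Section LA.
Variable n : nat.
Variable E : rel 'I_n.
Variable Z D : {set 'I_n}.
Hypothesis HZ : Z \subset D.
Hypothesis Hno : forall u v, u \in D -> v \notin D -> E u v ->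
  exists w, [&& w \notin D, E u w & w != v].

Local Open Scope ring_scope.

Definition Wj (j : 'I_n) : {set 'I_n} := [set i | E j i && (i \notin D)].

Definition wt (i j : 'I_n) : R :=
  if E j i then (if (j \in D) && ([pick i' in Wj j] == Some i)
                 then 1 - (#|Wj j|)%:R else 1) else 0.

Definition Am : 'M[R]_n := \matrix_(i, j) (if i == j then
   (if j \in D then 0 else - \sum_(i' | (i' \notin D) && (i' != j)) wt i' j)
   else wt i j).

Definition zc : 'cV[R]_n := \col_(i < n) (if i \in D then 0 else 1).

Lemma Qclass : qual_class E Am.
Proof.
move=> i j Hij; rewrite mxE (negbTE Hij) /wt.
case Eji: (E j i); split => //; last by rewrite eqxx.
move=> _; case: ifP => [/andP[HjD /eqP Hp]|_]; last by rewrite oner_eq0.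
move: Hp; case: pickP => // i' Hi' [Ei]; subst i'.
move: (Hi'); rewrite inE => /andP[_ HiD].
have [w /and3P[HwD Ejw Hwi]] := Hno HjD HiD Eji.
have Hk2 : (1 < #|Wj j|)%nat.
  have Hs : [set i; w] \subset Wj j.
    by apply/subsetP => x; rewrite !inE => /orP[/eqP->|/eqP->]; rewrite ?Eji ?HiD ?Ejw ?HwD.
  by have := subset_leq_card Hs; rewrite cards2 eq_sym Hwi.
rewrite subr_eq0 eq_sym pnatr_eq1; apply/eqP => Hk1; by rewrite Hk1 in Hk2.
Qed.

Lemma Z1 j : \sum_(i | i \notin D) Am i j = 0.
Proof.
case HjD: (j \in D).
  rewrite (eq_bigr (fun i => wt i j)); last first.
    move=> i Hi; rewrite mxE; have -> : (i == j) = false by apply: contraNF Hi => /eqP ->.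
    by [].
  have -> : \sum_(i | i \notin D) wt i j =
     \sum_(i in Wj j) (if [pick i' in Wj j] == Some i then 1 - (#|Wj j|)%:R else 1).
    rewrite big_mkcond [RHS]big_mkcond; apply: eq_bigr => i _.
    by rewrite /wt inE HjD /=; case: (E j i); case: (i \in D).
  case: pickP => [p Hp|Hn]; last by rewrite big_pred0.
  rewrite (eq_bigr (fun i => 1 - (i == p)%:R * (#|Wj j|)%:R)); last first.
    move=> i _; case: (eqVneq i p) => [->|Hip]; first by rewrite eqxx mul1r.
    have -> : (Some p == Some i) = false by apply/eqP => -[E1]; rewrite E1 eqxx in Hip.
    by rewrite mul0r subr0.
  rewrite sumrB sumr_const -mulr_suml.
  rewrite (bigD1 p) //= eqxx big1 => [|i /andP[_ /negbTE ->] //].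
  by rewrite addr0 mul1r -mulr_natl mulr1 subrr.
rewrite (bigD1 j) ?HjD //= mxE eqxx HjD.
rewrite (eq_bigr (fun i => wt i j)); last first.
  by move=> i /andP[_ /negbTE Hij]; rewrite mxE Hij.
by rewrite addNr.
Qed.

Lemma Z2 : zc^T *m Am = 0.
Proof.
apply/matrixP => a j; rewrite !mxE; transitivity (\sum_(i | i \notin D) Am i j); last exact: Z1.
rewrite [RHS]big_mkcond; apply: eq_bigr => i _; rewrite !mxE.
by case: (i \in D); rewrite /= ?mul0r ?mul1r.
Qed.

Lemma Z3 : zc^T *m input_matrix Z = 0.
Proof.
apply/matrixP => a k; rewrite !mxE.
have HkD : enum_val k \in D by apply: (subsetP HZ); apply: enum_valP.
rewrite (bigD1 (enum_val k)) //= big1 => [|i /negbTE Hi]; last by rewrite !mxE Hi mulr0.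
by rewrite !mxE HkD mul0r addr0.
Qed.

Lemma Z4 k : (Am ^+ k *m input_matrix Z)^T *m zc = 0.
Proof.
rewrite -(trmxK zc) -trmx_mul mulmxA.
case: k => [|k]; first by rewrite expr0 mulmx1 Z3 trmx0.
by rewrite exprS -mulmxE mulmxA Z2 !mul0mx trmx0.
Qed.

Lemma not_ctrl (x0 : 'I_n) : x0 \notin D -> ~ controllable Am (input_matrix Z).
Proof.
move=> Hx0 Hc.
have Hsub : (\sum_(k < n) <<(Am ^+ k *m input_matrix Z)^T>> <= kermx zc)%MS.
  apply/sumsmx_subP => k _; rewrite genmxE; apply/sub_kermxP; exact: Z4.
have := mxrankS Hsub; rewrite mxrank_ker Hc.
have : (\rank zc != 0)%nat.
  rewrite mxrank_eq0; apply/eqP => /matrixP /(_ x0 0) /eqP.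
  by rewrite !mxE (negbTE Hx0) oner_eq0.
have := ltn_ord x0. lia.
Qed.
End LA.

Lemma force (n : nat) (E : rel 'I_n) (Z : {set 'I_n}) : SSC E Z ->
  forall D : {set 'I_n}, Z \subset D -> (exists x, x \notin D) ->
  exists u v, [/\ u \in D, v \notin D, E u v & forall w, E u w -> w \notin D -> w = v].
Proof.
move=> Hssc D HZ [x0 Hx0].
case: (boolP [exists u, exists v, [&& u \in D, v \notin D, E u v &
          [forall w, E u w ==> (w \in D) || (w == v)]]]).
  move=> /existsP[u /existsP[v /and4P[Hu Hv Euv /forallP Hw]]].
  exists u, v; split=> // w Euw HwD.
  by have := Hw w; rewrite Euw /= (negbTE HwD) /= => /eqP.
move=> Hn; exfalso.
have Hno : forall u v, u \in D -> v \notin D -> E u v ->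
    exists w, [&& w \notin D, E u w & w != v].
  move=> u v Hu Hv Euv.
  move/existsPn: Hn => /(_ u) /existsPn /(_ v); rewrite Hu Hv Euv /=.
  move=> /forallPn [w]; rewrite negb_imply negb_or => /and3P[Euw HwD Hwv].
  by exists w; rewrite HwD Euw Hwv.
exact: (not_ctrl HZ Hx0 (Hssc _ (Qclass Hno))).
Qed.


Section Comb.
Variable n : nat.
Variable E : rel 'I_n.
Variable Z : {set 'I_n}.

Definition Dof (cs : seq (seq 'I_n)) : {set 'I_n} := [set x | x \in flatten cs].

Record cinv (cs : seq (seq (ordinal n))) (T : 'I_n -> nat) : Prop := Inv {
 i_ne : all (fun c => c != [::]) cs;
 i_uniq : uniq (flatten cs);
 i_src : chain_sources cs = Z;
 i_size : size cs = #|Z|;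
 i_Z : Z \subset Dof cs;
 i_rng : forall x, x \in Dof cs -> (1 <= T x <= #|Dof cs| - #|Z| + 1)%N;
 i_T1 : forall x, x \in chain_sources cs -> T x = 1%N;
 i_dist : forall x y, x != y -> x \in Dof cs -> y \in Dof cs ->
    x \notin chain_sources cs -> y \notin chain_sources cs -> T x != T y;
 i_ord : forall x y, chain_edge cs x y -> (T x < T y)%N;
 i_E : forall x y, chain_edge cs x y -> E x y;
 i_G : forall x s w, chain_edge cs x s -> E x w -> ~~ chain_edge cs x w ->
    (w \in Dof cs) && (T w < T s)%N }.

Lemma chain_edge_mem (cs : seq (seq (ordinal n))) (x y : ordinal n) : chain_edge cs x y -> (x \in flatten cs) && (y \in flatten cs).
Proof.
case/hasP => c Hc; case: c Hc => [|a s] Hc //= /zip_beh_mem /andP[H1 H2].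
apply/andP; split; apply/flattenP; exists (a :: s) => //.
by rewrite in_cons H2 orbT.
Qed.

Lemma cstep (cs : seq (seq (ordinal n))) (T : ordinal n -> nat) (u v : ordinal n) : cinv cs T -> u \in Dof cs -> v \notin Dof cs -> E u v ->
  (forall w, E u w -> w \notin Dof cs -> w = v) ->
  exists cs' T', cinv cs' T' /\ #|Dof cs'| = #|Dof cs|.+1.
Proof.
move=> I Hu Hv Euv Hw.
have Hnoe : forall y, ~~ chain_edge cs u y.
  move=> y; apply/negP => Huy.
  have Hnv : ~~ chain_edge cs u v.
    apply/negP => /chain_edge_mem /andP[_ Hv']; by rewrite inE Hv' in Hv.
  by have /andP[Hv' _] := i_G I Huy Euv Hnv; rewrite Hv' in Hv.
move: (Hu); rewrite inE => /flattenP [c Hc Huc].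
have Hne : c != [::] by move: (i_ne I) => /allP; apply.
case: c Hne Hc Huc => [//|a s] _ Hc Huc.
have Hlast : last a s = u.
  case: (eqVneq u (last a s)) => [->//|Hl].
  have [y Hy] := zip_beh_last Huc Hl.
  by move: (Hnoe y); rewrite /chain_edge; move/hasPn => /(_ _ Hc) /=; rewrite Hy.
have [cs1 [cs2 Ecs]] : exists cs1 cs2, cs = cs1 ++ (a :: s) :: cs2.
  by case/splitPr: Hc => cs1 cs2; exists cs1, cs2.
set cs' := cs1 ++ (a :: rcons s v) :: cs2.
have F1 : forall x, (x \in flatten cs') = (x \in flatten cs) || (x == v).
  move=> x; rewrite Ecs !flatten_cat /= !mem_cat !in_cons !mem_cat mem_rcons in_cons.
  by case: (eqVneq x v) => [->|Hxv]; rewrite ?eqxx ?orbT ?(negbTE Hxv) ?orbF.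
have Hvf : v \notin flatten cs by rewrite inE in Hv.
have F1u : uniq (flatten cs').
  have P : perm_eq (flatten cs') (v :: flatten cs).
    apply/permP => p; rewrite Ecs !flatten_cat /= !count_cat /= count_cat -cats1 count_cat /=.
    rewrite !count_cat; lia.
  by rewrite (perm_uniq P) /= Hvf (i_uniq I).
have F2 : forall x y, chain_edge cs' x y = chain_edge cs x y || ((x, y) == (u, v)).
  move=> x y; rewrite /chain_edge Ecs !has_cat /= zip_rcons_beh Hlast.
  by case: ((x, y) == (u, v)); rewrite ?orbT ?orbF.
have F3 : chain_sources cs' = chain_sources cs.
  by apply/setP => x; rewrite /chain_sources Ecs !inE !has_cat.
have F4 : size cs' = size cs by rewrite Ecs !size_cat.
have F5 : Dof cs' = v |: Dof cs.
  by apply/setP => x; rewrite !inE F1 orbC.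
have HZD : (#|Z| <= #|Dof cs|)%N by apply: subset_leq_card (i_Z I).
have Hne : forall x, x \in Dof cs -> (x == v) = false.
  by move=> x Hx; apply/negbTE; apply: contraNneq Hv => <-.
exists cs', (fun x => if x == v then (#|Dof cs| - #|Z| + 2)%N else T x).
split; last by rewrite F5 cardsU1 Hv.
constructor.
- by move: (i_ne I); rewrite Ecs !all_cat /= => /andP[-> ->].
- exact: F1u.
- by rewrite F3 (i_src I).
- by rewrite F4 (i_size I).
- by rewrite F5; apply: subset_trans (i_Z I) (subsetUr _ _).
- move=> x; rewrite F5 cardsU1 Hv in_setU1 => /orP[/eqP->|Hx]; first by rewrite eqxx; lia.
  by rewrite Hne //; have := i_rng I Hx; lia.
- move=> x; rewrite F3 => Hx.
  have xD : x \in Dof cs by apply: (subsetP (i_Z I)); rewrite -(i_src I).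
  by rewrite Hne // (i_T1 I).
- move=> x y Hxy; rewrite F5 F3 !in_setU1 => /orP[/eqP Ex|Hx] /orP[/eqP Ey|Hy] Hxs Hys.
  + by rewrite Ex Ey eqxx in Hxy.
  + by rewrite Ex eqxx Hne //; apply/eqP; have := i_rng I Hy; lia.
  + by rewrite Ey eqxx Hne //; apply/eqP; have := i_rng I Hx; lia.
  + by rewrite !Hne //; apply: (i_dist I).
- move=> x y; rewrite F2 => /orP[H|/eqP[-> ->]].
    have /andP[Hx Hy] := chain_edge_mem H.
    by rewrite !Hne ?inE //; apply: (i_ord I).
  by rewrite eqxx (Hne u Hu); have := i_rng I Hu; lia.
- by move=> x y; rewrite F2 => /orP[/(i_E I)//|/eqP[-> ->]].
- move=> x s0 w; rewrite !F2 => Hxs Exw; rewrite negb_or => /andP[Hxw Hne2].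
  case/orP: Hxs => [Hxs|/eqP[Ex Es]].
    have /andP[HwD Hlt] := i_G I Hxs Exw Hxw.
    have /andP[_ HsD] := chain_edge_mem Hxs.
    rewrite F5 in_setU1 HwD orbT /= !Hne ?inE; [exact: Hlt|exact: HsD|by rewrite inE in HwD].
  subst x s0.
  have HwD : w \in Dof cs.
    by apply/negPn/negP => H; move: Hne2; rewrite (Hw w Exw H) eqxx.
  rewrite F5 in_setU1 HwD orbT eqxx Hne //=; have /andP[_ H] := i_rng I HwD; apply: (leq_ltn_trans H); by rewrite ltn_add2l.
Qed.

Hypothesis Hforce : forall D : {set 'I_n}, Z \subset D -> (exists x, x \notin D) ->
  exists u v, [/\ u \in D, v \notin D, E u v & forall w, E u w -> w \notin D -> w = v].

Lemma citer k : forall (cs : seq (seq 'I_n)) T, cinv cs T -> (n - #|Dof cs| <= k)%N ->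
  exists cs' T', cinv cs' T' /\ Dof cs' = setT.
Proof.
elim: k => [|k IH] cs T I Hk; (case: (boolP [forall x, x \in Dof cs]) => [/forallP Hall|Hnall];
  [by exists cs, T; split => //; apply/setP => x; rewrite in_setT Hall|]);
  move/forallPn: Hnall => [x Hx];
  have Hlt : (#|Dof cs| < n)%N by
    (rewrite -[X in (_ < X)%N]card_ord -cardsT; apply: proper_card; rewrite properT;
     apply/negP => /eqP HD; by rewrite HD in_setT in Hx).
  by move: Hk; rewrite leqn0 subn_eq0 leqNgt Hlt.
have [u [v [Hu Hv Euv Hw]]] := Hforce (i_Z I) (ex_intro _ x Hx).
have [cs' [T' [I' Hc]]] := cstep I Hu Hv Euv Hw.
apply: (IH cs' T' I'); rewrite Hc subnS; move: Hk; set m := (n - _)%N; lia.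
Qed.

Lemma flat1 (s : seq 'I_n) : flatten [seq [:: z] | z <- s] = s.
Proof. by elim: s => //= z s ->. Qed.

Lemma main_comb : exists (cs : seq (seq 'I_n)) (T : 'I_n -> nat),
    [/\ chain_cover cs, chain_sources cs = Z, time_function cs T
      & in_graph_class cs T E].
Proof.
set cs0 := [seq [:: z] | z <- enum Z].
have Hf : flatten cs0 = enum Z by rewrite flat1.
have Hs0 : chain_sources cs0 = Z.
  apply/setP => x; rewrite inE has_map.
  apply/hasP/idP => [[z Hz /eqP[<-]]|Hx]; first by rewrite -mem_enum.
  by exists x; rewrite ?mem_enum //= eqxx.
have Hce0 : forall x y, ~~ chain_edge cs0 x y.
  by move=> x y; rewrite /chain_edge has_map; apply/hasP => -[z _].
have Hd0 : Dof cs0 = Z by apply/setP => x; rewrite inE Hf mem_enum.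
have I0 : cinv cs0 (fun _ => 1%N).
  constructor.
  - by rewrite all_map; apply/allP.
  - by rewrite Hf enum_uniq.
  - exact: Hs0.
  - by rewrite size_map cardE.
  - by rewrite Hd0.
  - by move=> x _; rewrite /= leq_addl.
  - by [].
  - by move=> x y _; rewrite Hd0 Hs0 => ->.
  - by move=> x y; rewrite (negbTE (Hce0 x y)).
  - by move=> x y; rewrite (negbTE (Hce0 x y)).
  - by move=> x y w; rewrite (negbTE (Hce0 x y)).
have [cs [T [I HD]]] := @citer n cs0 _ I0 (leq_subr _ _).
have HinD : forall x, x \in Dof cs by move=> x; rewrite HD in_setT.
have Hg : gamma cs = (#|Dof cs| - #|Z| + 1)%N by rewrite /gamma (i_size I) HD cardsT card_ord.
exists cs, T; split.
- split; first exact: (i_ne I). split; first exact: (i_uniq I).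
  by move=> v; move: (HinD v); rewrite inE.
- exact: (i_src I).
- split; [|split; [|split]].
  + by move=> v; rewrite Hg; apply: (i_rng I).
  + exact: (i_T1 I).
  + by move=> u v Huv; apply: (i_dist I).
  + exact: (i_ord I).
- split; first exact: (i_E I).
  move=> u v Hnce; rewrite /Tmax /chain_succ; case: pickP => [s Hs|Hnone] Hlt; apply/negP => Euv.
    have /andP[_ H] := i_G I Hs Euv Hnce; move: Hlt H; lia.
  have /andP[_ H] := i_rng I (HinD v). have := leq_trans Hlt H. by rewrite Hg ltnn.
Qed.
End Comb.

Unset Implicit Arguments.

Theorem theorem3 (n : nat) (E : rel 'I_n) (Z : {set 'I_n}) :
  SSC E Z ->
  exists (cs : seq (seq 'I_n)) (T : 'I_n -> nat),
    [/\ chain_cover cs, chain_sources cs = Z, time_function cs T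
      & in_graph_class cs T E].
Proof.
move=> H; exact: (main_comb (force H)).
Qed.
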